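(* Let $G,H$ be graded groups, $U\subset G$ open, $\Phi:U\to H$ a smooth map and $x\in U$ (no Pansu differentiability or filtration-preservation is assumed). Then for all $i,j\ge1$ and $V\in\mathfrak g_j$, $$\lim_{\varepsilon\to0^+}\varepsilon^{-i}\,\mathrm{pr}_{\mathfrak h,i}\circ\ln_H\big(\Phi_x(\exp_G(\varepsilon^jV))\big)=\begin{cases}0&\text{if } j>i,\\ \mathrm{pr}_{\mathfrak h,i}(\mathfrak d_x\Phi(V))&\text{if } j=i.\end{cases}$$
   Context: A graded group is a connected, simply connected nilpotent real Lie group $G$ whose Lie algebra $\mathfrak g=\bigoplus_{j\ge1}\mathfrak g_j$ (finitely many nonzero) satisfies $[\mathfrak g_i,\mathfrak g_j]\subset\mathfrak g_{i+j}$; $\exp_G$ is a global diffeomorphism with inverse $\ln_G$. $H$ is a graded group with Lie algebra $\mathfrak h=\bigoplus_j\mathfrak h_j$, and $\mathrm{pr}_{\mathfrak h,i}$ denotes the projection onto $\mathfrak h_i$ along $\bigoplus_{j\neq i}\mathfrak h_j$. Notation: $\Phi_x(y):=\Phi(x)^{-1}\Phi(xy)$ (defined when $xy\in U$). $\mathfrak d_x\Phi:=(D_0L_{\Phi(x)})^{-1}\circ D_x\Phi\circ D_0L_x:\mathfrak g\to\mathfrak h$, where $D_0L_x$ is the differential at the identity of the left translation by $x$. *)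

(* Defs.v *)
From HB Require Import structures.
From mathcomp Require Import all_boot all_order all_algebra.
From mathcomp Require Import all_classical all_reals all_analysis.
Set Implicit Arguments. Unset Strict Implicit. Unset Printing Implicit Defensive.
Import Order.TTheory GRing.Theory Num.Theory.
Import numFieldNormedType.Exports.
Local Open Scope classical_set_scope.
Local Open Scope ring_scope.

Fixpoint iterD {R : numFieldType} {V W : normedModType R}
    (vs : seq V) (f : V -> W) : V -> W :=
  match vs with
  | [::] => f
  | v :: vs' => fun x => 'D_v (iterD vs' f) x
  end.

Definition smooth_on {R : numFieldType} {V W : normedModType R}
    (U : set V) (f : V -> W) : Prop :=
  forall (vs : seq V) (x : V), U x ->
    {for x, continuous (iterD vs f)} /\ (forall v : V, derivable (iterD vs f) x v).

Definition dil_w {R : realType} {n : nat} (w : 'I_n -> nat) (lam : R)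
    (x : 'rV[R]_n) : 'rV[R]_n :=
  \row_k (lam ^+ w k * x 0 k).

(* A graded group, presented in exponential coordinates with respect to a
   basis of its Lie algebra adapted to the grading: the carrier is R^n
   (= the Lie algebra g, via exp_G), the basis vector e_k lies in the layer
   g_(gdeg k) (gdeg k >= 1), and the group law is smooth, has the straight
   lines through 0 as one-parameter subgroups (i.e. exp_G = ln_G = id), and
   the dilations (which act by lam^j on g_j) are group automorphisms
   (equivalently [g_i, g_j] <= g_(i+j)). *)
Record GradedGroup (R : realType) (n : nat) : Type := {
  gmul : 'rV[R]_n -> 'rV[R]_n -> 'rV[R]_n;
  gdeg : 'I_n -> nat;
  gdeg_pos : forall k, (0 < gdeg k)%N;
  gmulA : associative gmul;
  gmul0x : left_id 0 gmul;
  gmulx0 : right_id 0 gmul;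
  gmul_line : forall (v : 'rV[R]_n) (s t : R), gmul (s *: v) (t *: v) = (s + t) *: v;
  gmul_smooth : smooth_on setT (fun p : 'rV[R]_n * 'rV[R]_n => gmul p.1 p.2);
  gmul_dil : forall lam : R, 0 < lam -> forall x y,
      dil_w gdeg lam (gmul x y) = gmul (dil_w gdeg lam x) (dil_w gdeg lam y)
}.

Definition expG {R : realType} {n : nat} (G : GradedGroup R n) (v : 'rV[R]_n) := v.
Definition lnG {R : realType} {n : nat} (G : GradedGroup R n) (x : 'rV[R]_n) := x.

(* Group inverse: in exponential coordinates x^{-1} = -x
   (x * (-x) = (1 - 1) x = 0 by gmul_line). *)
Definition ginv {R : realType} {n : nat} (G : GradedGroup R n) (x : 'rV[R]_n) := - x.

Definition in_layer {R : realType} {n : nat} (G : GradedGroup R n) (j : nat)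
    (V : 'rV[R]_n) : Prop :=
  forall k, gdeg G k != j -> V 0 k = 0.

Definition pr {R : realType} {n : nat} (G : GradedGroup R n) (i : nat)
    (y : 'rV[R]_n) : 'rV[R]_n :=
  \row_k (if gdeg G k == i then y 0 k else 0).

Definition Phix {R : realType} {n m : nat} (G : GradedGroup R n) (H : GradedGroup R m)
    (Phi : 'rV[R]_n -> 'rV[R]_m) (x y : 'rV[R]_n) : 'rV[R]_m :=
  gmul H (ginv H (Phi x)) (Phi (gmul G x y)).

(* matrix of D_0 L_p (row-vector convention: W |-> W *m D0L G p) *)
Definition D0L {R : realType} {n : nat} (G : GradedGroup R n) (p : 'rV[R]_n) : 'M[R]_n :=
  \matrix_(k, l) (('D_(delta_mx 0 k) (gmul G p) 0) 0 l).

Definition dfrak {R : realType} {n m : nat} (G : GradedGroup R n) (H : GradedGroup R m)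
    (Phi : 'rV[R]_n -> 'rV[R]_m) (x V : 'rV[R]_n) : 'rV[R]_m :=
  ('D_(V *m D0L G x) Phi x) *m invmx (D0L H (Phi x)).

(* Main.v *)
Require Import Defs.
From HB Require Import structures.
From mathcomp Require Import all_boot all_order all_algebra.
From mathcomp Require Import all_classical all_reals all_analysis.
Import Order.TTheory GRing.Theory Num.Theory.
Import numFieldNormedType.Exports.
Local Open Scope classical_set_scope.
Local Open Scope ring_scope.

Module Aux.
Import Num.Def.
Set Implicit Arguments. Unset Strict Implicit.


Lemma rV_norm_le (R : realType) m (M : 'rV[R]_m) (r : R) :
  0 <= r -> (forall j, `|M 0 j| <= r) -> `|M| <= r.
Proof.
move=> r0 Hj; rewrite [leLHS]/normr /= mx_normrE.
apply: bigmax_le => // -[i j] _ /=.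
by rewrite (ord1 i); apply: Hj.
Qed.

Lemma rV_coord_le (R : realType) m (M : 'rV[R]_m) j : `|M 0 j| <= `|M|.
Proof.
rewrite [leRHS]/normr /= mx_normrE.
by apply: (le_trans _ (le_bigmax _ _ (0, j))).
Qed.

Lemma derive_coord (R : realType) n m (f : 'rV[R]_n -> 'rV[R]_m) y v j :
  derivable f y v -> is_derive y v (fun z => f z 0 j) ('D_v f y 0 j).
Proof.
move=> df.
have H := continuous_cvg _ (@coord_continuous R 1 m 0 j ('D_v f y)) df.
have E : ((fun M : 'rV[R]_m => M 0 j) \o
   (fun h : R => h^-1 *: ((f \o shift y) (h *: v) - f y))) =
   (fun h : R => h^-1 *: (((fun z => f z 0 j) \o shift y) (h *: v) - f y 0 j)).
  by apply: funext => h /=; rewrite !mxE.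
rewrite E in H.
apply: DeriveDef; first by apply/cvg_ex; eexists; exact: H.
by rewrite /derive; apply: cvg_lim => //; exact: H.
Qed.

Lemma is_derive_line (R : realType) n (F : 'rV[R]_n -> R) y e c :
  derivable F (y + c *: e) e ->
  is_derive c 1 (fun t => F (y + t *: e)) ('D_e F (y + c *: e)).
Proof.
move=> df.
have E : (fun h : R => h^-1 *: (((fun t => F (y + t *: e)) \o shift c) (h *: 1)
            - F (y + c *: e))) =
         (fun h : R => h^-1 *: ((F \o shift (y + c *: e)) (h *: e) - F (y + c *: e))).
  apply: funext => h /=.
  have -> : h *: (1:R) = h by rewrite /GRing.scale /= mulr1.
  by rewrite scalerDl addrCA addrA.
apply: DeriveDef; rewrite /derivable /derive E //.
Qed.

Lemma mvt2 (R : realType) (G dG : R -> R) (s : R) :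
  (forall c : R, `|c| <= `|s| -> is_derive c (1:R) G (dG c)) ->
  exists c, `|c| <= `|s| /\ G s - G 0 = dG c * s.
Proof.
move=> HG.
have oo_cc (a b c : R) : c \in `]a, b[ -> a <= c <= b.
  by rewrite in_itv /= => /andP[h1 h2]; rewrite !ltW.
have cont a b : (forall c, a <= c <= b -> `|c| <= `|s|) ->
    {within `[a, b], continuous G}.
  move=> hab; apply/continuous_in_subspaceT => z /[1!inE].
  move=> hz.
  have [dz _] := HG z (hab z hz).
  by apply: differentiable_continuous; apply/derivable1_diffP.
case: (leP 0 s) => hs.
  have hab : forall c, 0 <= c <= s -> `|c| <= `|s|.
    by move=> c /andP[c0 cs]; rewrite !ger0_norm //; apply: le_trans cs.
  have [c cin E] := @MVT_segment R G dG 0 s hs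
    (fun c cin => HG c (hab c (oo_cc _ _ _ cin))) (cont _ _ hab).
  exists c; split; first by apply: hab; move: cin; rewrite in_itv.
  by rewrite E subr0.
have hab : forall c, s <= c <= 0 -> `|c| <= `|s|.
  by move=> c /andP[sc c0]; rewrite !ler0_norm ?lerN2 // ltW.
have [c cin E] := @MVT_segment R G dG s 0 (ltW hs)
    (fun c cin => HG c (hab c (oo_cc _ _ _ cin))) (cont _ _ hab).
exists c; split; first by apply: hab; move: cin; rewrite in_itv.
by rewrite -opprB E sub0r mulrN opprK.
Qed.


Definition Pk (R : realType) n (k : nat) (h : 'rV[R]_n) : 'rV[R]_n :=
  \row_l (if (l < k)%N then h 0 l else 0).
Arguments Pk {R n}.

Lemma Pk0 (R : realType) n (h : 'rV[R]_n) : Pk 0 h = 0.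
Proof. by apply/rowP => l; rewrite !mxE. Qed.

Lemma Pkn (R : realType) n (h : 'rV[R]_n) : Pk n h = h.
Proof. by apply/rowP => l; rewrite !mxE ltn_ord. Qed.

Lemma PkS (R : realType) n (h : 'rV[R]_n) (k : 'I_n) :
  Pk k.+1 h = Pk k h + h 0 k *: delta_mx 0 k.
Proof.
apply/rowP => l; rewrite !mxE eqxx /=.
case: (eqVneq l k) => [->|lk] /=.
  by rewrite ltnSn ltnn mulr1 add0r.
have lk' : (nat_of_ord l == k) = false by exact: negbTE lk.
by rewrite mulr0 addr0 ltnS leq_eqVlt lk'.
Qed.

Lemma Pk_bound (R : realType) n (h : 'rV[R]_n) (k : 'I_n) (c : R) :
  `|c| <= `|h 0 k| -> `|Pk k h + c *: delta_mx 0 k| <= `|h|.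
Proof.
move=> hc; apply: rV_norm_le => // l; rewrite !mxE eqxx /=.
case: (eqVneq l k) => [->|kl]; rewrite ?mulr1 ?mulr0 ?addr0.
  rewrite ltnn add0r; apply: (le_trans hc); apply: rV_coord_le.
case: (l < k)%N; rewrite ?normr0 //; exact: rV_coord_le.
Qed.

Lemma sum_continuous (R : realType) n m p (F : 'I_p -> 'rV[R]_n -> 'rV[R]_m) :
  (forall k, continuous (F k)) -> continuous (fun h => \sum_(k < p) F k h).
Proof.
move=> Fc; rewrite -fct_sumE.
apply: (@big_ind _ (fun g : 'rV[R]_n -> 'rV[R]_m => continuous g)) => //.
- move=> y; exact: (@cst_continuous _ _ (0 : 'rV[R]_m)).
- move=> f g fc gc y; exact: continuousD (fc y) (gc y).
Qed.

Lemma KL (R : realType) n m (f : 'rV[R]_n -> 'rV[R]_m) (x : 'rV[R]_n) :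
  (\forall y \near x, forall v, derivable f y v) ->
  (forall v, {for x, continuous (fun y => 'D_v f y)}) ->
  differentiable f x.
Proof.
move=> Hd Hc.
pose e k : 'rV[R]_n := delta_mx 0 k.
pose D k := 'D_(e k) f x.
pose L (h : 'rV[R]_n) := \sum_(k < n) h 0 k *: D k.
have Llin : linear L.
  move=> a u v; rewrite /L scaler_sumr -big_split /=; apply: eq_bigr => k _.
  by rewrite !mxE scalerDl scalerA.
pose LM := GRing.isLinear.Build _ _ _ _ L Llin.
pose LL : {linear 'rV[R]_n -> 'rV[R]_m} := HB.pack L LM.
have Lc : continuous LL.
  apply: (@sum_continuous R n m n (fun k h => h 0 k *: D k)) => k y.
  by apply: continuousZr_tmp; apply: coord_continuous.
have E : f \o shift x = cst (f x) + (LL : 'rV[R]_n -> 'rV[R]_m) +o_ (0 : 'rV[R]_n) id.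
  apply/eqaddoP => eps eps0.
  pose eps' := eps / n.+1%:R.
  have eps'0 : 0 < eps' by rewrite divr_gt0.
  have Hk : forall k, \forall y \near x, `|D k - 'D_(e k) f y| < eps'.
    by move=> k; have /cvgrPdist_lt := Hc (e k); apply.
  have Hall : \forall y \near x, forall k, `|D k - 'D_(e k) f y| < eps' by exact: (@filter_forall _ _ (fun k y => `|D k - 'D_(e k) f y| < eps') (nbhs x) _ Hk).
  have [d d0 Hb] : exists2 d : R, 0 < d & forall y, ball x d y ->
     (forall v, derivable f y v) /\ (forall k, `|D k - 'D_(e k) f y| < eps').
    have HH := @filterI _ _ (nbhs_pfilter x) _ _ Hd Hall.
    move: HH => /nbhs_ballP [d d0 Hb]; exists d => // y /Hb [H1 H2].
  apply/nbhs_ballP; exists d => // h Hh.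
  move: Hh; rewrite -ball_normE /= sub0r normrN => Hh.
  have LLE : (f \o +%R^~ x - (cst (f x) + L)) h = f (h + x) - (f x + L h) by [].
  rewrite LLE.
  apply: rV_norm_le; first by apply: mulr_ge0; [exact: ltW | exact: normr_ge0].
  move=> j.
  have ptball : forall (k : 'I_n) c, `|c| <= `|h 0 k| -> ball x d (x + Pk k h + c *: e k).
    move=> k c hc; rewrite -ball_normE /= -addrA opprD addrA subrr add0r normrN.
    have H0 := Pk_bound hc; exact: le_lt_trans H0 Hh.
  have term : forall k : 'I_n, `|f (x + Pk k.+1 h) 0 j - f (x + Pk k h) 0 j - h 0 k * D k 0 j| <= `|h| * eps'.
    move=> k.
    have HG : forall c : R, `|c| <= `|h 0 k| -> is_derive c (1:R) (fun t => f (x + Pk k h + t *: e k) 0 j)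
       ((fun t => 'D_(e k) f (x + Pk k h + t *: e k) 0 j) c).
      move=> c hc; have [Hder _] := Hb _ (ptball k c hc).
      have H1 := derive_coord j (Hder (e k)).
      have H2 := @is_derive_line R n (fun z => f z 0 j) (x + Pk k h) (e k) c (@ex_derive _ _ _ _ _ _ _ H1).
      apply: is_derive_eq H2 _; exact: (@derive_val _ _ _ _ _ _ _ H1).
    have [c [hc Ec]] := mvt2 HG.
    move: Ec => /=.
    have -> : x + Pk k h + h 0 k *: e k = x + Pk k.+1 h by rewrite PkS addrA.
    rewrite scale0r addr0 => ->.
    rewrite [X in X - _]mulrC -mulrBr normrM; apply: ler_pM => //; first exact: rV_coord_le.
    have [_ H3] := Hb _ (ptball k c hc).
    have := H3 k; rewrite distrC => /ltW; apply: le_trans.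
    have <- : ('D_(e k) f (x + Pk k h + c *: e k) - D k) 0 j = 'D_(e k) f (x + Pk k h + c *: e k) 0 j - D k 0 j by rewrite !mxE.
    exact: rV_coord_le.
  have E1 : (f (h + x) - (f x + L h)) 0 j = \sum_(k < n) (f (x + Pk k.+1 h) 0 j - f (x + Pk k h) 0 j - h 0 k * D k 0 j).
    rewrite sumrB -(big_mkord xpredT (fun k => f (x + Pk k.+1 h) 0 j - f (x + Pk k h) 0 j)).
    rewrite telescope_sumr // Pkn Pk0 addr0 [h + x]addrC.
    rewrite !mxE /L summxE opprD addrA; congr (_ - _).
    by apply: eq_bigr => k _; rewrite !mxE.
  rewrite E1; apply: le_trans (ler_norm_sum _ _ _) _.
  apply: le_trans (ler_sum _ (fun k _ => term k)) _.
  rewrite sumr_const card_ord.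
  rewrite -mulr_natr -mulrA [eps * _]mulrC; apply: ler_wpM2l; first exact: normr_ge0.
  rewrite /eps' -mulrA ler_piMr ?(ltW eps0) //.
  by rewrite mulrC ler_pdivrMr ?ltr0Sn // mul1r ler_nat.
have dfe := diff_unique Lc E.
apply/diff_locallyP; rewrite dfe; split => //.
Qed.


Lemma gmul_partial (R : realType) n (GG : GradedGroup R n) (p y v : 'rV[R]_n) :
  derivable (gmul GG p) y v /\
  'D_v (gmul GG p) y = 'D_((0 : 'rV[R]_n), v) (fun q : 'rV[R]_n * 'rV[R]_n => gmul GG q.1 q.2) (p, y).
Proof.
set M := fun q : 'rV[R]_n * 'rV[R]_n => gmul GG q.1 q.2.
have E : (fun h : R => h^-1 *: ((gmul GG p \o shift y) (h *: v) - gmul GG p y)) =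
         (fun h : R => h^-1 *: ((M \o shift (p, y)) (h *: ((0 : 'rV[R]_n), v)) - M (p, y))).
  by apply: funext => h /=; rewrite /M /= scaler0 add0r.
have Hs := gmul_smooth GG.
have [_ Hd] := Hs [::] (p, y) I.
split; first by rewrite /derivable E; exact: (Hd (0, v)).
by rewrite /derive E.
Qed.

Lemma gmul_diff (R : realType) n (GG : GradedGroup R n) (p y : 'rV[R]_n) :
  differentiable (gmul GG p) y.
Proof.
set M := fun q : 'rV[R]_n * 'rV[R]_n => gmul GG q.1 q.2.
apply: KL.
  by apply: (@nearW _ _ _ (nbhs_pfilter y)) => z v; exact: (gmul_partial GG p z v).1.
move=> v.
have Hs := gmul_smooth GG.
have [Hc _] := Hs [:: (0, v)] (p, y) I.
have -> : (fun z => 'D_v (gmul GG p) z) = (fun z => 'D_((0 : 'rV[R]_n), v) M z) \o (fun z => (p, z)).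
  by apply: funext => z /=; rewrite (gmul_partial GG p z v).2.
apply: continuous_comp; last exact: Hc.
by apply: (@cvg_pair _ _ _ (nbhs y) (nbhs p) (nbhs y) (nbhs_pfilter y) (nbhs_pfilter p) (nbhs_pfilter y)); [exact: cvg_cst | exact: cvg_id].
Qed.

Lemma Phi_diff (R : realType) n m (U : set 'rV[R]_n) (Phi : 'rV[R]_n -> 'rV[R]_m) x :
  open U -> smooth_on U Phi -> U x -> differentiable Phi x.
Proof.
move=> oU sP Ux; apply: KL.
  have NU : nbhs x U by apply: open_nbhs_nbhs; split.
  apply: (@filterS _ _ (nbhs_pfilter x) U) => // z Uz v.
  exact: ((sP [::] z Uz).2 v).
by move=> v; exact: (sP [:: v] x Ux).1.
Qed.

Lemma D0L_lin (R : realType) n (GG : GradedGroup R n) (p : 'rV[R]_n) :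
  D0L GG p = lin1_mx ('d (gmul GG p) 0).
Proof. by apply/matrixP => k l; rewrite !mxE deriveE //; exact: gmul_diff. Qed.

Lemma D0L_mul (R : realType) n (GG : GradedGroup R n) (p u : 'rV[R]_n) :
  u *m D0L GG p = 'd (gmul GG p) 0 u.
Proof. by rewrite D0L_lin mul_rV_lin1. Qed.

Lemma gmul_inv_l (R : realType) n (GG : GradedGroup R n) (p : 'rV[R]_n) :
  gmul GG (- p) p = 0.
Proof. by have := gmul_line GG p (-1) 1; rewrite scaleN1r scale1r addNr scale0r. Qed.

Lemma gmul_inv_r (R : realType) n (GG : GradedGroup R n) (p : 'rV[R]_n) :
  gmul GG p (- p) = 0.
Proof. by have := gmul_line GG p 1 (-1); rewrite scaleN1r scale1r addrN scale0r. Qed.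

Lemma D0L_inv (R : realType) n (GG : GradedGroup R n) (p w : 'rV[R]_n) :
  w *m invmx (D0L GG p) = 'd (gmul GG (- p)) p w.
Proof.
have pq : gmul GG p \o gmul GG (- p) = id.
  by apply: funext => y /=; rewrite gmulA gmul_inv_r gmul0x.
have key : forall w, ('d (gmul GG (- p)) p w) *m D0L GG p = w.
  move=> u; rewrite D0L_mul.
  have dc := diff_comp (gmul_diff GG (- p) p) (gmul_diff GG p (gmul GG (- p) p)).
  rewrite gmul_inv_l in dc.
  have := congr1 (fun F => F u) dc; rewrite /= => <-.
  rewrite pq.
  have idd := @diff_val _ _ _ _ _ _ _ (is_diff_id p).
  by rewrite idd.
set B := lin1_mx ('d (gmul GG (- p)) p).
have BA : B *m D0L GG p = 1%:M.
  by apply/row_matrixP => i; rewrite !rowE mulmxA mul_rV_lin1 key mulmx1.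
have [_ Au] := mulmx1_unit BA.
by rewrite -[in LHS](key w) mulmxK.
Qed.


Lemma prZ (R : realType) m (H : GradedGroup R m) i (a : R) (y : 'rV[R]_m) :
  pr H i (a *: y) = a *: pr H i y.
Proof. by apply/rowP => k; rewrite !mxE; case: ifP => //; rewrite mulr0. Qed.

Lemma prB (R : realType) m (H : GradedGroup R m) i (y z : 'rV[R]_m) :
  pr H i (y - z) = pr H i y - pr H i z.
Proof. by apply/rowP => k; rewrite !mxE; case: ifP => //; rewrite subr0. Qed.

Lemma pr_norm (R : realType) m (H : GradedGroup R m) i (y : 'rV[R]_m) :
  `|pr H i y| <= `|y|.
Proof.
apply: rV_norm_le => // k; rewrite !mxE; case: ifP => _; first exact: rV_coord_le.
by rewrite normr0.
Qed.

Lemma dnbhs0P (R : realType) (P : R -> Prop) : (\forall t \near 0^', P t) ->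
  exists2 d : R, 0 < d & forall t, 0 < t -> t < d -> P t.
Proof.
move=> /nbhs_ballP [d d0 Hd]; exists d => // t t0 td; apply: Hd.
  by rewrite /ball /= sub0r normrN gtr0_norm.
by rewrite gt_eqF.
Qed.

Lemma right0P (R : realType) (P : R -> Prop) (d : R) : 0 < d ->
  (forall t, 0 < t -> t < d -> P t) -> \forall t \near 0^'+, P t.
Proof.
move=> d0 Hd; apply/nbhs_ballP; exists d => // t /= tb t0; apply: Hd => //.
by move: tb; rewrite /ball /= sub0r normrN gtr0_norm.
Qed.

Lemma pow_small (R : realType) (eps : R) k : (1 <= k)%N -> 0 < eps -> eps <= 1 ->
  eps ^+ k <= eps.
Proof.
case: k => // k _ e0 e1; rewrite exprS ler_piMr ?(ltW e0) //.
by rewrite exprn_ile1 // ltW.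
Qed.

End Aux.
Import Aux.

Theorem lemma2p6 (R : realType) (n m : nat) (G : GradedGroup R n) (H : GradedGroup R m)
    (U : set 'rV[R]_n) (Phi : 'rV[R]_n -> 'rV[R]_m) (x : 'rV[R]_n) :
  open U -> smooth_on U Phi -> U x ->
  forall (i j : nat), (1 <= i)%N -> (1 <= j)%N ->
  forall V : 'rV[R]_n, in_layer G j V ->
    let F := fun eps : R =>
      eps ^- i *: pr H i (lnG H (Phix G H Phi x (expG G (eps ^+ j *: V)))) in
    ((j > i)%N -> F @ 0^'+ --> (0 : 'rV[R]_m)) /\
    (j = i -> F @ 0^'+ --> pr H i (dfrak G H Phi x V)).
Proof.
move=> oU sP Ux i j i1 j1 V _ F.
set p := Phi x.
pose sV := fun t : R => t *: V.
pose c := gmul G x \o sV.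
pose g := gmul H (- p) \o (Phi \o c).
have Fg : forall eps, F eps = eps ^- i *: pr H i (g (eps ^+ j)) by [].
have ds : differentiable sV 0 := @ex_diff _ _ _ _ _ _ _ (is_diff_scalel (0:R) V).
have dsv : 'd sV 0 = sV :> (R -> 'rV[R]_n) := @diff_val _ _ _ _ _ _ _ (is_diff_scalel (0:R) V).
have dc : differentiable c 0 := differentiable_comp ds (gmul_diff G x _).
have c0 : c 0 = x by rewrite /c /sV /= scale0r gmulx0.
have dP : differentiable Phi (c 0) by rewrite c0; exact: Phi_diff oU sP Ux.
have dy : differentiable (Phi \o c) 0 := differentiable_comp dc dP.
have y0 : (Phi \o c) 0 = p by rewrite /= c0.
have dg : differentiable g 0 := differentiable_comp dy (gmul_diff H (- p) _).
have g'E : 'd g 0 1 = dfrak G H Phi x V.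
  rewrite /dfrak D0L_inv D0L_mul deriveE; last exact: Phi_diff oU sP Ux.
  rewrite (diff_comp dy (gmul_diff H (- p) _)) /= c0.
  rewrite (diff_comp dc dP) /= c0.
  rewrite (diff_comp ds (gmul_diff G x _)) /= dsv /sV /= scale0r scale1r.
  by [].
have g0 : g 0 = 0 by rewrite /g /= c0 gmul_inv_l.
have Dg : derivable g 0 1 by apply: diff_derivable.
have L1 : 'D_1 g 0 = dfrak G H Phi x V by rewrite deriveE // g'E.
have Dg' : (fun h : R => h^-1 *: ((g \o shift 0) (h *: 1) - g 0)) @ 0^' --> 'D_1 g 0 := Dg.
have E : (fun h : R => h^-1 *: ((g \o shift 0) (h *: 1) - g 0)) = (fun h => h^-1 *: g h).
  by apply: funext => h; rewrite g0 subr0 /= addr0 [h *: 1]mulr1.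
rewrite E L1 in Dg'.
move/cvgrPdist_lt: Dg' => HQ.
set D := dfrak G H Phi x V in HQ *.
split.
  move=> ij; apply/cvgrPdist_lt => eps e0.
  have [d1 d10 Hd1] := dnbhs0P (HQ 1 ltr01).
  set K := `|D| + 1.
  have K0 : 0 < K by rewrite /K ltr_pwDr.
  apply: (@right0P _ _ (Num.min 1 (Num.min d1 (eps / K)))).
    by rewrite !lt_min ltr01 d10 divr_gt0.
  move=> t t0; rewrite !lt_min => /and3P [t1 td1 teK].
  set u := t ^+ j.
  have u0 : 0 < u by rewrite exprn_gt0.
  have ut : u <= t by apply: pow_small => //; exact: ltW.
  have := Hd1 u u0 (le_lt_trans ut td1) => Hu.
  rewrite sub0r normrN Fg -/u.
  have -> : g u = u *: (u^-1 *: g u) by rewrite scalerA mulfV ?gt_eqF // scale1r.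
  rewrite prZ scalerA /u mulrC -expfB // normrZ.
  have tji : t ^+ (j - i) <= t by apply: pow_small; [rewrite subn_gt0 | | exact: ltW].
  apply: (@le_lt_trans _ _ (t * K)).
    apply: ler_pM => //.
      by rewrite ger0_norm // exprn_ge0 // ltW.
    apply: le_trans (pr_norm _ _ _) _.
    set Q := (t ^+ j)^-1 *: g (t ^+ j).
    have -> : Q = D - (D - Q) by rewrite opprB addrC subrK.
    by apply: le_trans (ler_normB _ _) _; rewrite /K lerD2l ltW.
  by rewrite -ltr_pdivlMr.
move=> ji; rewrite ji in Fg; apply/cvgrPdist_lt => eps e0.
have [d1 d10 Hd1] := dnbhs0P (HQ eps e0).
apply: (@right0P _ _ (Num.min 1 d1)); first by rewrite lt_min ltr01 d10.
move=> t t0; rewrite lt_min => /andP [t1 td1].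
have u0 : 0 < t ^+ i by rewrite exprn_gt0.
have ut : t ^+ i <= t by apply: pow_small => //; exact: ltW.
rewrite Fg -prZ -prB; apply: le_lt_trans (pr_norm _ _ _) _.
exact: Hd1 _ u0 (le_lt_trans ut td1).
Qed.
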